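(* Let $(\mathbb{P},\leq)$ be a lattice with enough prime elements, and let $p\in\mathbb{P}$. Then $\mathsf{S}_{\mathrm{fin}}(\mathbb{V}_p,\mathbb{V}_p)$ holds if and only if Player I does not have a winning strategy in the game $\mathsf{G}_{\mathrm{fin}}(\mathbb{V}_p,\mathbb{V}_p)$.
   Context: A lattice is a poset in which every two elements $a,b$ have a supremum $a\vee b$ and an infimum $a\wedge b$. For $p\in\mathbb{P}$, $\mathbb{V}_p$ denotes the family of all subsets $A\subseteq\mathbb{P}$ such that $\sup A$ exists and equals $p$. A prime element of $\mathbb{P}$ is an element $q\in\mathbb{P}$ (required to be different from the maximum $1$ if $\mathbb{P}$ is bounded) such that for all $a,b\in\mathbb{P}$, $a\wedge b\leq q$ implies $a\leq q$ or $b\leq q$. $\mathbb{P}$ has enough prime elements if whenever $a,b\in\mathbb{P}$ satisfy $a\not\leq b$, there is a prime element $q$ with $b\leq q$ and $a\not\leq q$. For families $\mathcal{A},\mathcal{B}$ of subsets of $\mathbb{P}$: $\mathsf{S}_{\mathrm{fin}}(\mathcal{A},\mathcal{B})$ means that for every sequence $(A_n)_{n\in\omega}$ of members of $\mathcal{A}$ there are finite sets $F_n\subseteq A_n$ with $\bigcup_{n\in\omega}F_n\in\mathcal{B}$. The game $\mathsf{G}_{\mathrm{fin}}(\mathcal{A},\mathcal{B})$ has innings $n\in\omega$: in inning $n$ Player I plays some $A_n\in\mathcal{A}$ and Player II responds with a finite $F_n\subseteq A_n$; Player II wins the play if $\bigcup_{n\in\omega}F_n\in\mathcal{B}$, otherwise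 Player I wins. A strategy for Player I is a rule assigning Player I's move to each finite sequence of Player II's previous moves; it is winning if Player I wins every play following it. *)

(* Defs.v *)
From Stdlib Require Import List.
Import ListNotations.

Section Defs.

Context {T : Type} (le : T -> T -> Prop).

Definition is_partial_order : Prop :=
  (forall x, le x x) /\
  (forall x y z, le x y -> le y z -> le x z) /\
  (forall x y, le x y -> le y x -> x = y).

Definition is_sup (A : T -> Prop) (s : T) : Prop :=
  (forall a, A a -> le a s) /\ (forall u, (forall a, A a -> le a u) -> le s u).

Definition is_inf (A : T -> Prop) (m : T) : Prop :=
  (forall a, A a -> le m a) /\ (forall u, (forall a, A a -> le u a) -> le u m).

Definition pair_set (a b : T) : T -> Prop := fun x => x = a \/ x = b.

Definition is_lattice : Prop :=
  is_partial_order /\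
  (forall a b, exists s, is_sup (pair_set a b) s) /\
  (forall a b, exists m, is_inf (pair_set a b) m).

Definition Vp (p : T) (A : T -> Prop) : Prop := is_sup A p.

(* q is not the maximum of P (this is vacuous if P has no maximum) *)
Definition prime_elt (q : T) : Prop :=
  ~ (forall x, le x q) /\
  (forall a b m, is_inf (pair_set a b) m -> le m q -> le a q \/ le b q).

Definition enough_primes : Prop :=
  forall a b, ~ le a b -> exists q, prime_elt q /\ le b q /\ ~ le a q.

Definition finite_set (F : T -> Prop) : Prop :=
  exists l : list T, forall x, F x <-> In x l.

Definition subset (F A : T -> Prop) : Prop := forall x, F x -> A x.

Definition bigunion (F : nat -> T -> Prop) : T -> Prop :=
  fun x => exists n, F n x.

Definition S_fin (cA cB : (T -> Prop) -> Prop) : Prop :=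
  forall A : nat -> T -> Prop, (forall n, cA (A n)) ->
  exists F : nat -> T -> Prop,
    (forall n, finite_set (F n) /\ subset (F n) (A n)) /\ cB (bigunion F).

(* A strategy for Player I in G_fin(calA, calB): assigns to each finite
   sequence [F_0; ...; F_{n-1}] of Player II's previous moves Player I's
   move in inning n, which must be a member of calA. *)
Definition strategyI (cA : (T -> Prop) -> Prop)
  (sigma : list (T -> Prop) -> T -> Prop) : Prop :=
  forall h, cA (sigma h).

Definition history (F : nat -> T -> Prop) (n : nat) : list (T -> Prop) :=
  map F (seq 0 n).

Definition follows (sigma : list (T -> Prop) -> T -> Prop)
  (F : nat -> T -> Prop) : Prop :=
  forall n, finite_set (F n) /\ subset (F n) (sigma (history F n)).

Definition winning_I (cA cB : (T -> Prop) -> Prop)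
  (sigma : list (T -> Prop) -> T -> Prop) : Prop :=
  strategyI cA sigma /\
  forall F, follows sigma F -> ~ cB (bigunion F).

Definition I_has_winning (cA cB : (T -> Prop) -> Prop) : Prop :=
  exists sigma, winning_I cA cB sigma.

End Defs.

(* Main.v *)
Require Import Defs.
From Stdlib Require Import List Arith Lia Classical ClassicalEpsilon.
Import ListNotations.

Lemma Vp_char {T} (le : T -> T -> Prop) (Hlat : is_lattice le)
  (Hpr : enough_primes le) p (B : T -> Prop) :
  (forall b, B b -> le b p) ->
  (forall q, prime_elt le q -> ~ le p q -> exists b, B b /\ ~ le b q) ->
  Vp le p B.
Proof.
  intros Hub Hcov. split; [exact Hub|]. intros u Hu.
  destruct (classic (le p u)) as [H|H]; [exact H|].
  destruct (Hpr p u H) as [q [Hq [Huq Hpq]]].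
  destruct (Hcov q Hq Hpq) as [b [Hb Hbq]].
  exfalso; apply Hbq. destruct Hlat as [[_ [Htr _]] _].
  eapply Htr; [apply Hu, Hb | exact Huq].
Qed.

Lemma Vp_cover {T} (le : T -> T -> Prop) p (B : T -> Prop) :
  Vp le p B -> forall q, ~ le p q -> exists b, B b /\ ~ le b q.
Proof.
  intros [Hub Hl] q Hpq. apply NNPP; intro Hn. apply Hpq, Hl.
  intros a Ha. apply NNPP; intro Hq. apply Hn; eauto.
Qed.

Definition Xs {T} (le : T -> T -> Prop) p q := prime_elt le q /\ ~ le p q.

Definition opn {T} (le : T -> T -> Prop) p (O : T -> Prop) :=
  forall q, Xs le p q -> O q ->
  exists a, le a p /\ ~ le a q /\ forall q', Xs le p q' -> ~ le a q' -> O q'.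

Lemma opn_and {T} (le : T -> T -> Prop) p (Hlat : is_lattice le) O1 O2 :
  opn le p O1 -> opn le p O2 -> opn le p (fun q => O1 q /\ O2 q).
Proof.
  intros H1 H2 q Hq [o1 o2].
  destruct (H1 q Hq o1) as [a1 [a1p [a1q A1]]].
  destruct (H2 q Hq o2) as [a2 [a2p [a2q A2]]].
  destruct Hlat as [[Hr [Htr Han]] [_ Hinf]].
  destruct (Hinf a1 a2) as [m Hm].
  assert (ma1 : le m a1) by (apply (proj1 Hm); left; reflexivity).
  assert (ma2 : le m a2) by (apply (proj1 Hm); right; reflexivity).
  exists m. split; [eauto|]. split.
  - intro Hmq. destruct Hq as [[_ Hpr] _].
    destruct (Hpr a1 a2 m Hm Hmq); contradiction.
  - intros q' Hq' Hmq'. split; [apply A1|apply A2]; auto; intro; apply Hmq'; eauto.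
Qed.

Lemma opn_forall_list {T} (le : T -> T -> Prop) p (Hlat : is_lattice le)
  {A} (l : list A) (O : A -> T -> Prop) :
  (forall s, In s l -> opn le p (O s)) ->
  opn le p (fun q => forall s, In s l -> O s q).
Proof.
  induction l as [|a l IH]; intros Hall.
  - intros q Hq _. exists p. destruct Hlat as [[Hr _] _].
    split; [apply Hr|]. split; [apply Hq|]. intros q' _ _ s [].
  - intros q Hq Hq2.
    destruct (opn_and le p Hlat (O a) (fun q => forall s, In s l -> O s q)
       (Hall a (or_introl eq_refl)) (IH (fun s Hs => Hall s (or_intror Hs))) q Hq
       (conj (Hq2 a (or_introl eq_refl)) (fun s Hs => Hq2 s (or_intror Hs))))
      as [x [H1 [H2 Hx]]].
    exists x; split; [auto|]; split; [auto|].
    intros q' Hq' Hxq' s Hs; destruct (Hx q' Hq' Hxq') as [X1 X2].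
    destruct Hs as [<-|Hs]; [exact X1|apply X2; exact Hs].
Qed.

Lemma uniform_list {A} (l : list A) (P : A -> nat -> Prop) :
  (forall a m m', m <= m' -> P a m -> P a m') ->
  (forall a, In a l -> exists m, P a m) -> exists m, forall a, In a l -> P a m.
Proof.
  intros Hmono. induction l as [|a l IH]; intros Hall.
  - exists 0. intros a [].
  - destruct (Hall a (or_introl eq_refl)) as [m1 Hm1].
    destruct IH as [m2 Hm2]. { intros b Hb. apply Hall; right; auto. }
    exists (max m1 m2). intros b [<-|Hb].
    + eapply Hmono; [|exact Hm1]; lia.
    + eapply Hmono; [|apply Hm2; exact Hb]; lia.
Qed.

Fixpoint allseq (L c : nat) : list (list nat) :=
  match L with
  | 0 => [[]]
  | S L' => flat_map (fun i => map (cons i) (allseq L' c)) (seq 0 (S c))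
  end.

Lemma allseq_spec L c s :
  In s (allseq L c) <-> length s = L /\ (forall x, In x s -> x <= c).
Proof.
  revert s; induction L as [|L IH]; intros [|n s]; cbn [allseq length].
  - simpl. split; [intros _; split; [auto|intros x []]|auto].
  - simpl. split; [intros [H|[]]; discriminate | intros [H _]; discriminate].
  - rewrite in_flat_map. split; [|intros [H _]; discriminate].
    intros [i [_ Hi]]. apply in_map_iff in Hi. destruct Hi as [y [Hy _]]; discriminate.
  - rewrite in_flat_map. split.
    + intros [i [Hi Hi2]]. apply in_map_iff in Hi2. destruct Hi2 as [y [Hy Hy2]].
      injection Hy as <- <-. apply IH in Hy2. destruct Hy2 as [Hl Hy2].
      apply in_seq in Hi. split; [lia|]. intros x [<-|Hx]; [lia|auto].
    + intros [Hl Hx]. exists n. split; [apply in_seq; specialize (Hx n (or_introl eq_refl)); lia|].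
      apply in_map_iff. exists s. split; [auto|]. apply IH. split; [lia|]. intros; apply Hx; right; auto.
Qed.

Definition SL c := flat_map (fun L => allseq L c) (seq 0 (S c)).

Lemma SL_spec c s : In s (SL c) <-> length s <= c /\ (forall x, In x s -> x <= c).
Proof.
  unfold SL. rewrite in_flat_map. split.
  - intros [L [HL Hs]]. apply allseq_spec in Hs. apply in_seq in HL. destruct Hs. split; [lia|auto].
  - intros [Hl Hx]. exists (length s). split; [apply in_seq; lia|]. apply allseq_spec; auto.
Qed.

Lemma SL_mono c c' s : c <= c' -> In s (SL c) -> In s (SL c').
Proof.
  intros H Hs. apply SL_spec in Hs. apply SL_spec. destruct Hs as [H1 H2].
  split; [lia|]. intros x Hx; specialize (H2 x Hx); lia.
Qed.
Definition Ev {T} (Fh : list (T -> Prop) -> nat -> T -> Prop) h m : T -> Prop :=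
  fun x => exists i, i <= m /\ Fh h i x.

Definition Nd {T} (Fh : list (T -> Prop) -> nat -> T -> Prop) (s : list nat) :=
  fold_left (fun h m => h ++ [Ev Fh h m]) s [].

Definition O0 {T} (le : T -> T -> Prop) Fh s m q :=
  exists a, Ev Fh (Nd Fh s) m a /\ ~ le a q.

Definition Hs {T} (le : T -> T -> Prop) Fh c m q :=
  forall s, In s (SL c) -> O0 le Fh s m q.

Definition H2 {T} (le : T -> T -> Prop) Fh n m q :=
  exists c, Hs le Fh n c q /\ Hs le Fh c m q.

Definition goodF {T} (le : T -> T -> Prop) p (sigma : list (T -> Prop) -> T -> Prop) Fh :=
  forall h, (forall n, finite_set (Fh h n) /\ subset (Fh h n) (sigma h)) /\
            Vp le p (bigunion (Fh h)).

Lemma Ev_finite {T} (Fh : list (T -> Prop) -> nat -> T -> Prop) h m :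
  (forall i, finite_set (Fh h i)) -> finite_set (Ev Fh h m).
Proof.
  intros Hf. induction m as [|m IH].
  - destruct (Hf 0) as [l Hl]. exists l. intros x. rewrite <- Hl. unfold Ev.
    split; [intros [i [Hi Hx]]; replace i with 0 in Hx by lia; exact Hx|].
    intros Hx; exists 0; split; [lia|exact Hx].
  - destruct IH as [l1 Hl1]. destruct (Hf (S m)) as [l2 Hl2].
    exists (l1 ++ l2). intros x. rewrite in_app_iff, <- Hl1, <- Hl2. unfold Ev. split.
    + intros [i [Hi Hx]]. destruct (Nat.eq_dec i (S m)) as [->|Hne]; [right; exact Hx|].
      left; exists i; split; [lia|exact Hx].
    + intros [[i [Hi Hx]]|Hx]; [exists i; split; [lia|exact Hx]|exists (S m); split; [lia|exact Hx]].
Qed.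

Lemma Ev_mono {T} (Fh : list (T -> Prop) -> nat -> T -> Prop) h m m' x :
  m <= m' -> Ev Fh h m x -> Ev Fh h m' x.
Proof. intros Hm [i [Hi Hx]]. exists i; split; [lia|exact Hx]. Qed.

Lemma O0_mono {T} (le : T -> T -> Prop) Fh s m m' q :
  m <= m' -> O0 le Fh s m q -> O0 le Fh s m' q.
Proof. intros Hm [a [Ha Hq]]. exists a; split; [eapply Ev_mono; eauto|exact Hq]. Qed.

Lemma Hs_mono {T} (le : T -> T -> Prop) Fh c m m' q :
  m <= m' -> Hs le Fh c m q -> Hs le Fh c m' q.
Proof. intros Hm H s Hs'. eapply O0_mono; eauto. Qed.

Lemma Hs_anti {T} (le : T -> T -> Prop) Fh c c' m q :
  c <= c' -> Hs le Fh c' m q -> Hs le Fh c m q.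
Proof. intros Hc H s Hs'. apply H. eapply SL_mono; eauto. Qed.

Lemma H2_mono {T} (le : T -> T -> Prop) Fh n m m' q :
  m <= m' -> H2 le Fh n m q -> H2 le Fh n m' q.
Proof. intros Hm [c [H1 H3]]. exists c; split; [exact H1|eapply Hs_mono; eauto]. Qed.

Lemma O0_cover {T} (le : T -> T -> Prop) p sigma Fh s q :
  goodF le p sigma Fh -> Xs le p q -> exists m, O0 le Fh s m q.
Proof.
  intros HF [_ Hpq]. destruct (HF (Nd Fh s)) as [_ HV].
  destruct (Vp_cover le p _ HV q Hpq) as [a [[i Hi] Haq]].
  exists i, a. split; [exists i; split; [lia|exact Hi]|exact Haq].
Qed.

Lemma Hs_cover {T} (le : T -> T -> Prop) p sigma Fh c q :
  goodF le p sigma Fh -> Xs le p q -> exists m, Hs le Fh c m q.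
Proof.
  intros HF Hq. destruct (uniform_list (SL c) (fun s m => O0 le Fh s m q)) as [m Hm].
  - intros; eapply O0_mono; eauto.
  - intros s _. eapply O0_cover; eauto.
  - exists m. exact Hm.
Qed.

Lemma H2_cover {T} (le : T -> T -> Prop) p sigma Fh n q :
  goodF le p sigma Fh -> Xs le p q -> exists m, H2 le Fh n m q.
Proof.
  intros HF Hq. destruct (Hs_cover le p sigma Fh n q HF Hq) as [c Hc].
  destruct (Hs_cover le p sigma Fh c q HF Hq) as [m Hm].
  exists m, c. auto.
Qed.

Lemma Ev_le {T} (le : T -> T -> Prop) p sigma Fh h m a :
  goodF le p sigma Fh -> strategyI (Vp le p) sigma -> Ev Fh h m a -> le a p.
Proof.
  intros HF Hst [i [_ Hi]]. destruct (HF h) as [Hf _]. destruct (Hf i) as [_ Hsub].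
  apply (proj1 (Hst h)). apply Hsub. exact Hi.
Qed.

Lemma O0_open {T} (le : T -> T -> Prop) p sigma Fh s m :
  goodF le p sigma Fh -> strategyI (Vp le p) sigma -> opn le p (O0 le Fh s m).
Proof.
  intros HF Hst q Hq [a [Ha Haq]]. exists a. split; [eapply Ev_le; eauto|].
  split; [exact Haq|]. intros q' _ Haq'. exists a; auto.
Qed.

Lemma Hs_open {T} (le : T -> T -> Prop) (Hlat : is_lattice le) p sigma Fh c m :
  goodF le p sigma Fh -> strategyI (Vp le p) sigma -> opn le p (Hs le Fh c m).
Proof.
  intros HF Hst. apply (opn_forall_list le p Hlat (SL c) (fun s => O0 le Fh s m)).
  intros s _. eapply O0_open; eauto.
Qed.

Lemma H2_open {T} (le : T -> T -> Prop) (Hlat : is_lattice le) p sigma Fh n m :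
  goodF le p sigma Fh -> strategyI (Vp le p) sigma -> opn le p (H2 le Fh n m).
Proof.
  intros HF Hst q Hq [c Hc].
  destruct (opn_and le p Hlat _ _ (Hs_open le Hlat p sigma Fh n c HF Hst)
     (Hs_open le Hlat p sigma Fh c m HF Hst) q Hq Hc) as [a [H1 [H3 H4]]].
  exists a. split; [auto|]. split; [auto|]. intros q' Hq' Haq'. exists c. apply H4; auto.
Qed.
Lemma menger_g0 {T} (le : T -> T -> Prop) (Hlat : is_lattice le) (Hpr : enough_primes le)
  p sigma Fh :
  S_fin (Vp le p) (Vp le p) -> goodF le p sigma Fh -> strategyI (Vp le p) sigma ->
  exists g0 : nat -> nat, forall q, Xs le p q -> exists n, H2 le Fh n (g0 n) q.
Proof.
  intros HS HF Hst.
  set (A := fun n a => le a p /\ exists m, forall q, Xs le p q -> ~ le a q -> H2 le Fh n m q).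
  destruct (HS A) as [G [HG HGV]].
  - intros n. apply Vp_char; auto.
    + intros b [Hb _]; exact Hb.
    + intros q Hq Hpq. assert (Xq : Xs le p q) by (split; auto).
      destruct (H2_cover le p sigma Fh n q HF Xq) as [m Hm].
      destruct (H2_open le Hlat p sigma Fh n m HF Hst q Xq Hm) as [a [H1 [H3 H4]]].
      exists a. split; [split; [auto| exists m; auto]|auto].
  - assert (HM : forall n, exists M, forall a, G n a -> forall q, Xs le p q -> ~ le a q ->
                 H2 le Fh n M q).
    { intros n. destruct (HG n) as [[l Hl] Hsub].
      destruct (uniform_list l (fun a m => forall q, Xs le p q -> ~ le a q -> H2 le Fh n m q))
        as [M HM].
      - intros a m m' Hmm H q Hq Haq. eapply H2_mono; eauto.
      - intros a Ha. apply Hl in Ha. apply Hsub in Ha. destruct Ha as [_ Ha]. exact Ha.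
      - exists M. intros a Ha. apply HM. apply Hl. exact Ha. }
    exists (fun n => proj1_sig (constructive_indefinite_description _ (HM n))).
    intros q Hq. destruct (Vp_cover le p _ HGV q (proj2 Hq)) as [a [[n Ha] Haq]].
    exists n. destruct (constructive_indefinite_description _ (HM n)) as [M HMn]. simpl.
    eapply HMn; eauto.
Qed.

Fixpoint G0 (g0 : nat -> nat) n :=
  match n with 0 => g0 0 | S n' => max (G0 g0 n') (g0 (S n')) end.

Fixpoint gg (g0 : nat -> nat) k :=
  match k with 0 => 0 | S k' => max (G0 g0 (gg g0 k')) (S (gg g0 k')) end.

Lemma G0_ge g0 n : g0 n <= G0 g0 n.
Proof. destruct n; simpl; lia. Qed.

Lemma G0_mono g0 n n' : n <= n' -> G0 g0 n <= G0 g0 n'.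
Proof. induction 1; simpl; lia. Qed.

Lemma gg_S g0 k : gg g0 k < gg g0 (S k) /\ G0 g0 (gg g0 k) <= gg g0 (S k).
Proof. simpl; lia. Qed.

Lemma gg_mono g0 k k' : k <= k' -> gg g0 k <= gg g0 k'.
Proof. induction 1; [lia|]. pose proof (gg_S g0 m). lia. Qed.

Lemma gg_ge g0 k : k <= gg g0 k.
Proof. induction k; [lia|]. pose proof (gg_S g0 k). lia. Qed.

Lemma gg_interval g0 n : exists k, gg g0 k <= n < gg g0 (S k).
Proof.
  induction n as [|n [k Hk]].
  - exists 0. pose proof (gg_S g0 0). simpl in *. lia.
  - destruct (Nat.eq_dec (S n) (gg g0 (S k))) as [E|E].
    + exists (S k). pose proof (gg_S g0 (S k)). lia.
    + exists k. lia.
Qed.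

Lemma key {T} (le : T -> T -> Prop) Fh g0 q :
  (exists n, H2 le Fh n (g0 n) q) -> exists k, Hs le Fh (gg g0 k) (gg g0 (S k)) q.
Proof.
  intros [n [c [Hnc Hcm]]]. destruct (gg_interval g0 n) as [k Hk].
  destruct (Nat.lt_ge_cases c (gg g0 (S k))) as [Hc|Hc].
  - exists k. eapply Hs_mono; [|eapply Hs_anti; [|exact Hnc]]; lia.
  - exists (S k). eapply Hs_anti in Hcm; [|exact Hc].
    eapply Hs_mono; [|exact Hcm].
    pose proof (G0_ge g0 n). pose proof (G0_mono g0 n (gg g0 (S k))).
    pose proof (gg_S g0 (S k)). lia.
Qed.
Lemma Nd_snoc {T} (Fh : list (T -> Prop) -> nat -> T -> Prop) s m :
  Nd Fh (s ++ [m]) = Nd Fh s ++ [Ev Fh (Nd Fh s) m].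
Proof. unfold Nd. rewrite fold_left_app. reflexivity. Qed.

Lemma history_play {T} (Fh : list (T -> Prop) -> nat -> T -> Prop) (b : nat -> nat) k :
  history (fun k => Ev Fh (Nd Fh (map b (seq 0 k))) (b k)) k = Nd Fh (map b (seq 0 k)).
Proof.
  induction k as [|k IH]; [reflexivity|].
  unfold history in *. rewrite seq_S, !map_app. rewrite IH. simpl.
  rewrite Nd_snoc. reflexivity.
Qed.

Lemma prefix_in_SL g0 k : In (map (fun i => gg g0 (S i)) (seq 0 k)) (SL (gg g0 k)).
Proof.
  apply SL_spec. rewrite length_map, length_seq. split; [apply gg_ge|].
  intros x Hx. apply in_map_iff in Hx. destruct Hx as [i [<- Hi]]. apply in_seq in Hi.
  apply gg_mono. lia.
Qed.

Lemma main_dir {T} (le : T -> T -> Prop) (Hlat : is_lattice le) (Hpr : enough_primes le) p :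
  S_fin (Vp le p) (Vp le p) -> ~ I_has_winning (Vp le p) (Vp le p).
Proof.
  intros HS [sigma [Hst Hwin]].
  set (Fh := fun h => epsilon (inhabits (fun (_ : nat) (_ : T) => False))
     (fun F => (forall n, finite_set (F n) /\ subset (F n) (sigma h)) /\ Vp le p (bigunion F))).
  assert (HF : goodF le p sigma Fh).
  { intros h. unfold Fh. apply epsilon_spec. apply (HS (fun _ => sigma h)).
    intros; apply Hst. }
  destruct (menger_g0 le Hlat Hpr p sigma Fh HS HF Hst) as [g0 Hg0].
  set (b := fun i => gg g0 (S i)).
  set (Fp := fun k => Ev Fh (Nd Fh (map b (seq 0 k))) (b k)).
  apply (Hwin Fp).
  - intros n. unfold Fp. rewrite history_play. split.
    + apply Ev_finite. intros i. apply (HF _).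
    + intros x [i [_ Hi]]. destruct (HF (Nd Fh (map b (seq 0 n)))) as [Hf _].
      apply (Hf i). exact Hi.
  - apply Vp_char; auto.
    + intros a [n Ha]. eapply Ev_le; eauto.
    + intros q Hq Hpq. assert (Xq : Xs le p q) by (split; auto).
      destruct (key le Fh g0 q (Hg0 q Xq)) as [k Hk].
      destruct (Hk _ (prefix_in_SL g0 k)) as [a [Ha Haq]].
      exists a. split; [exists k; exact Ha|exact Haq].
Qed.

Lemma other_dir {T} (le : T -> T -> Prop) p :
  ~ I_has_winning (Vp le p) (Vp le p) -> S_fin (Vp le p) (Vp le p).
Proof.
  intros HnW A HA. apply NNPP; intro Hn. apply HnW.
  exists (fun h => A (length h)). split.
  - intros h. apply HA.
  - intros F Hfol HV. apply Hn. exists F. split; [|exact HV].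
    intros n. destruct (Hfol n) as [H1 H2]. split; [exact H1|].
    unfold history in H2. rewrite length_map, length_seq in H2. exact H2.
Qed.

Theorem theorem1p1 (T : Type) (le : T -> T -> Prop)
  (Hlat : is_lattice le) (Hprimes : enough_primes le) (p : T) :
  S_fin (Vp le p) (Vp le p) <-> ~ I_has_winning (Vp le p) (Vp le p).
Proof.
  split; [apply main_dir; auto|apply other_dir].
Qed.
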